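(* Let $n\ge1$, $0\le c_0<c_1<\dots<c_n$, $v_0\ge v_1\ge\dots\ge v_n>0$, $0\le\rho_k<\frac{v_k}{2}$ ($k=0,\dots,n$), and let $B=(b_{jk})_{j,k=0}^n$ with $b_{jk}=v_k-c_k$ if $j>k$, $b_{kk}=\frac{v_k}{2}-c_k-\rho_k$, $b_{jk}=-c_j$ if $j<k$. For $k=0,\dots,n$ let $B^{(k)}$ be the matrix obtained from $B$ by replacing column $k$ with the all-ones vector $\mathbf{1}_{n+1}$. Then $$\det B^{(n)}=\prod_{j=0}^{n-1}\Big(-\frac{v_j}{2}-\rho_j\Big),$$ and for $k=0,\dots,n-1$, $$\det B^{(k)}=\det(\tilde B_{n-k}+c_kJ_{n-k})\prod_{j=0}^{k-1}\Big(-\frac{v_j}{2}-\rho_j\Big),$$ where $\tilde B_{n-k}$ is the $(n-k)\times(n-k)$ principal submatrix of $B$ situated in the bottom right-hand corner (rows and columns $k+1,\dots,n$) and $J_{n-k}$ is the $(n-k)\times(n-k)$ all-ones matrix.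
   Context: Rows and columns of $B$ are indexed $0,\dots,n$. An empty product equals $1$. *)

(* Defs.v *)
From mathcomp Require Import all_boot all_order all_algebra.
Import Order.TTheory GRing.Theory Num.Theory.
Local Open Scope ring_scope.

Definition Bmat {R : fieldType} (n : nat) (c v rho : nat -> R) : 'M[R]_(n.+1) :=
  \matrix_(j < n.+1, k < n.+1)
    if (k < j)%N then v k - c k
    else if j == k then v k / 2 - c k - rho k
    else - c j.

Definition Bcol {R : fieldType} (n : nat) (c v rho : nat -> R) (k : 'I_n.+1)
  : 'M[R]_(n.+1) :=
  \matrix_(i < n.+1, j < n.+1) if j == k then 1 else Bmat n c v rho i j.

Definition Btilde {R : fieldType} (n : nat) (c v rho : nat -> R) (k : nat)
  : 'M[R]_(n - k) :=
  \matrix_(i < n - k, j < n - k) (Bmat n c v rho) (inord (k.+1 + i)) (inord (k.+1 + j)).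

(* Main.v *)
Require Import Defs.
From mathcomp Require Import all_boot all_order all_algebra zify ring.
Import Order.TTheory GRing.Theory Num.Theory.
Local Open Scope ring_scope.

Lemma det_castmx' {R : comNzRingType} m p (e : m = p) (A : 'M[R]_m) :
  \det (castmx (e,e) A) = \det A.
Proof. by case: p / e; rewrite castmx_id. Qed.

Ltac decb := repeat match goal with
 | |- context [ leq ?x ?y ] => first [ rewrite (_ : leq x y = true); last by lia | rewrite (_ : leq x y = false); last by lia ]
 | |- context [ (?x == ?y :> nat) ] => first [ rewrite (_ : (x == y :> nat) = true); last by lia | rewrite (_ : (x == y :> nat) = false); last by lia ]
 end.
Ltac solveif := decb; rewrite /= ?mul0r ?mul1r ?mulr1 ?subr0 ?sub0r ?subrr ?opprK //.

Lemma det0 {R : comNzRingType} m (A : 'M[R]_m) : m = 0%N -> \det A = 1.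
Proof. by move=> e; subst; exact: det_mx00. Qed.

Lemma gen (R : realFieldType) n (c v rho : nat -> R) (k : 'I_n.+1) :
  \det (Bcol n c v rho k) = \det (Btilde n c v rho k + c k *: const_mx 1)
          * \prod_(j < k) (- (v j / 2) - rho j).
Proof.
set A := Bcol n c v rho k.
set E : 'M[R]_n.+1 := \matrix_(i,j) ((i==j)%:R - ((i == k) && (j < k)%N)%:R * (v j - c j)).
set F : 'M[R]_n.+1 := \matrix_(i,j) ((i==j)%:R - ((k < i)%N && (j == k))%:R).
have dE : \det E = 1.
  rewrite det_trig; last first.
    apply/is_trig_mxP => i j lij; rewrite mxE.
    have -> : (i == j) = false by apply/negbTE; rewrite neq_ltn lij.
    have -> : (i == k) && (j < k)%N = false.
      by case: eqP => //= eik; rewrite eik in lij; apply/negbTE; rewrite -leqNgt ltnW.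
    by rewrite mul0r subr0.
  apply: big1 => i _; rewrite mxE eqxx.
  by case: eqP => [->|] /=; rewrite ?ltnn mul0r subr0.
have dF : \det F = 1.
  rewrite det_trig; last first.
    apply/is_trig_mxP => i j lij; rewrite mxE.
    have -> : (i == j) = false by apply/negbTE; rewrite neq_ltn lij.
    have -> : (k < i)%N && (j == k) = false.
      case: eqP; rewrite ?andbF //= => ejk; rewrite ejk in lij; apply/negbTE; lia.
    by rewrite subr0.
  apply: big1 => i _; rewrite mxE eqxx.
  by case: eqP => [->|] /=; rewrite ?ltnn ?andbF subr0.
have AE : forall i j, (A *m E) i j = A i j - ((j < k)%N)%:R * (v j - c j).
  move=> i j; rewrite mxE.
  under eq_bigr do rewrite [E _ _]mxE mulrBr.
  rewrite sumrB (bigD1 j) //= big1 /=; last first.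
    by move=> l /negbTE ->; rewrite mulr0.
  rewrite (bigD1 k) //= [X in _ - (_ + X)]big1 /=; last first.
    by move=> l /negbTE ->; rewrite /= mul0r mulr0.
  have Aik : A i k = 1 by rewrite /A /Bcol mxE eqxx.
  by rewrite !eqxx /= mulr1 !addr0 Aik mul1r.
have FM : forall (M : 'M[R]_n.+1) i j, (F *m M) i j = M i j - ((k < i)%N)%:R * M k j.
  move=> M i j; rewrite mxE.
  under eq_bigr do rewrite [F _ _]mxE mulrBl.
  rewrite sumrB (bigD1 i) //= big1 /=; last first.
    by move=> l; rewrite eq_sym => /negbTE ->; rewrite mul0r.
  rewrite (bigD1 k) //= [X in _ - (_ + X)]big1 /=; last first.
    by move=> l /negbTE ->; rewrite andbF mul0r.
  by rewrite !eqxx /= andbT mul1r !addr0.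
set M := F *m (A *m E).
have dM : \det M = \det A by rewrite /M !det_mulmx dE dF mul1r mulr1.
rewrite -dM.
pose h (a b : nat) := if (b < a)%N then v b - c b else if a == b then v b / 2 - c b - rho b else - c a.
pose f (a b : nat) := if b == k then 1 else h a b.
pose w (b : nat) := ((b < k)%N)%:R * (v b - c b).
pose g (a b : nat) := (f a b - w b) - ((k < a)%N)%:R * (f k b - w b).
have Bh : forall i j, Bmat n c v rho i j = h i j by move=> i j; rewrite mxE.
have Af : forall i j, A i j = f i j by move=> i j; rewrite /A /Bcol mxE Bh.
have Mg : forall i j, M i j = g i j by move=> i j; rewrite /M FM !AE !Af.
clearbody M.
have g0 : forall a b, (b <= k)%N -> (k < a)%N -> g a b = 0.
  move=> a b hb ha; rewrite /g /f /w /h; case: (eqVneq b k) => [->|?]; solveif.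
have gU : forall a b, (b < a)%N -> (a <= k)%N -> g a b = 0.
  move=> a b hb ha; rewrite /g /f /w /h; solveif.
have gD : forall a, (a < k)%N -> g a a = -(v a/2) - rho a.
  move=> a ha; rewrite /g /f /w /h; solveif.
  rewrite [X in _ - (X - _)](splitr (v a)); ring.
have gK : g k k = 1.
  rewrite /g /f /w /h; solveif.
have gR : forall a b, (k < a)%N -> (k < b)%N -> g a b = h a b + c k.
  move=> a b ha hb; rewrite /g /f /w /h; solveif.
have e : n.+1 = (k.+1 + (n - k))%N by have := ltn_ord k; lia.
rewrite -(@det_castmx' _ _ _ e M) -[castmx _ M]submxK.
have dl : dlsubmx (castmx (e,e) M) = 0.
  apply/matrixP => i j; rewrite !mxE castmxE Mg /=; apply: g0 => /=.
    by have := ltn_ord j; lia.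
  lia.
rewrite dl det_ublock mulrC; congr (_ * _).
  congr (\det _); apply/matrixP => i j; rewrite !mxE castmxE Mg /= gR /=; try lia.
  have hi := ltn_ord i; have hj := ltn_ord j.
  have hk := ltn_ord k; rewrite -val_eqE /= !inordK ?mulr1 //; lia.
rewrite -det_tr det_trig; last first.
  apply/is_trig_mxP => i j lij; rewrite !mxE castmxE Mg /=; apply: gU => //.
  by have := ltn_ord j; lia.
rewrite big_ord_recr /= !mxE castmxE Mg /= gK mulr1.
apply: eq_bigr => i _; rewrite !mxE castmxE Mg /= gD //.
Qed.

Theorem lemma5p3 (R : realFieldType) (n : nat) (c v rho : nat -> R) :
  (1 <= n)%N ->
  0 <= c 0%N ->
  (forall i, (i < n)%N -> c i < c i.+1) ->
  (forall i, (i < n)%N -> v i.+1 <= v i) ->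
  0 < v n ->
  (forall k, (k <= n)%N -> 0 <= rho k /\ rho k < v k / 2) ->
  \det (Bcol n c v rho ord_max) = \prod_(j < n) (- (v j / 2) - rho j)
  /\ (forall k : 'I_n.+1, (k < n)%N ->
        \det (Bcol n c v rho k) =
          \det (Btilde n c v rho k + c k *: const_mx 1)
          * \prod_(j < k) (- (v j / 2) - rho j)).
Proof.
move=> *; split; last by move=> k _; exact: gen.
by rewrite gen det0 ?mul1r // subnn.
Qed.
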